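(* Let $X_1,\dots,X_d$ be discrete random variables, $X_j\in\{0,\dots,r_j\}$, fix $M\subseteq\{1,\dots,d\}$, and suppose the variables $(X_j)_{j\in M}$ are completely independent with strictly positive joint probability vector $\pi=p(M)$. Let $\mathcal V=\bigcup_k\mathcal P(N_k)$ for a family of subsets $N_k\subsetneq M$, let $a,b\subseteq M$ be disjoint and nonempty and $\mathcal A=\{t\subseteq M: t\cap a\neq\emptyset,\ t\cap b\ne\emptyset\}$. Let $\mathcal I\subseteq\mathcal V\cap\mathcal A$, $\mathcal R=\mathcal V\setminus\mathcal I$, and let $\mathcal H\subseteq\mathcal P(M)\setminus\mathcal V$, and let $Q_{\mathcal I\mathcal H\mid\mathcal R}=F_{\mathcal I\mathcal H}-F_{\mathcal I\mathcal R}F_{\mathcal R\mathcal R}^{-1}F_{\mathcal R\mathcal H}$. Then (i) if $\mathcal H$ contains an interaction $v\notin\mathcal A$, the columns of $Q_{\mathcal I\mathcal H\mid\mathcal R}$ corresponding to $v$ are null; (ii) if $\mathcal H$ contains an interaction $v$ such that at least one variable $j\in v$ is not binary ($r_j\ge 2$) and is not contained in any element of $\mathcal V$, then $Q_{\mathcal I\mathcal H\mid\mathcal R}$ has a block of columns which is not of full rank.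
   Context: $\mathcal P(N)$ denotes the set of nonempty subsets of $N$. For $\emptyset\ne I\subseteq M$, $G(I,M)=\bigotimes_{j\in M}G_j$ where $G_j$ is the identity of order $r_j+1$ with its first column removed if $j\in I$ and $G_j=\mathbf 1_{r_j+1}$ otherwise (cells in lexicographic order). For a collection $\mathcal X\subseteq\mathcal P(M)$, $G_{\mathcal X}$ is the matrix with blocks of columns $G(I,M)$, $I\in\mathcal X$; $\Omega=\mathrm{diag}(\pi)-\pi\pi'$ and $F_{\mathcal X\mathcal Y}=G_{\mathcal X}'\Omega G_{\mathcal Y}$. The columns of $Q$ corresponding to $v\in\mathcal H$ are those coming from the block $G(v,M)$. Complete independence means $\pi(x)=\prod_{j\in M}\pi_j(x_j)$. *)

(* Defs.v *)
From HB Require Import structures.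
From mathcomp Require Import all_boot all_order all_algebra.
Set Implicit Arguments. Unset Strict Implicit. Unset Printing Implicit Defensive.
Import Order.TTheory GRing.Theory Num.Theory.
Local Open Scope ring_scope.

Definition lev (d : nat) (r : 'I_d -> nat) := {dffun forall j : 'I_d, 'I_(r j).+1}.

Definition supp d (r : 'I_d -> nat) (x : lev r) : {set 'I_d} :=
  [set j | (nat_of_ord (x j) != 0)%N].

(* cells of the contingency table of (X_j)_{j in M}: level vectors that are
   0 outside M (canonically identified with prod_{j in M} {0..r_j}). *)
Definition cells d (r : 'I_d -> nat) (M : {set 'I_d}) : {set lev r} :=
  [set x : lev r | supp x \subset M].

(* columns of G(I,M): level vectors c with c_j in {1..r_j} for j in I and
   c_j = 0 outside I, i.e. supp c = I.  The columns of G_X are those c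
   with supp c in X (the blocks for distinct I are disjoint). *)
Definition cols d (r : 'I_d -> nat) (X : {set {set 'I_d}}) : {set lev r} :=
  [set c : lev r | supp c \in X].

(* G_X : rows = cells, columns = cols X; the entry of G(I,M) at cell x and
   column c (supp c = I) is prod_{j in I} [x_j = c_j] (Kronecker product of
   identity-without-first-column for j in I and all-ones vectors else). *)
Definition Gmx {R : nzRingType} d (r : 'I_d -> nat) (M : {set 'I_d})
    (X : {set {set 'I_d}}) : 'M[R]_(#|cells r M|, #|cols r X|) :=
  \matrix_(s, k) \prod_(j in supp (enum_val k))
                    ((enum_val s : lev r) j == (enum_val k : lev r) j)%:R.

Definition Omega (R : nzRingType) d (r : 'I_d -> nat) (M : {set 'I_d})
    (pi : lev r -> R) : 'M[R]_#|cells r M| :=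
  \matrix_(s, t) ((s == t)%:R * pi (enum_val s) - pi (enum_val s) * pi (enum_val t)).

Arguments Omega {R d} r M pi.
Definition Fmx (R : nzRingType) d (r : 'I_d -> nat) (M : {set 'I_d}) (pi : lev r -> R)
    (X Y : {set {set 'I_d}}) : 'M[R]_(#|cols r X|, #|cols r Y|) :=
  (Gmx (R:=R) r M X)^T *m Omega r M pi *m Gmx (R:=R) r M Y.

Arguments Fmx {R d} r M pi X Y.
Definition Qmx (R : comUnitRingType) d (r : 'I_d -> nat) (M : {set 'I_d}) (pi : lev r -> R)
    (I H Rc : {set {set 'I_d}}) : 'M[R]_(#|cols r I|, #|cols r H|) :=
  Fmx r M pi I H - Fmx r M pi I Rc *m invmx (Fmx r M pi Rc Rc) *m Fmx r M pi Rc H.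

Arguments Qmx {R d} r M pi I H Rc.
Definition marg (R : nzRingType) d (r : 'I_d -> nat) (M : {set 'I_d}) (pi : lev r -> R)
    (j : 'I_d) (l : 'I_(r j).+1) : R :=
  \sum_(x in cells r M | x j == l) pi x.

Arguments marg {R d} r M pi j l.
Definition completely_independent (R : nzRingType) d (r : 'I_d -> nat)
    (M : {set 'I_d}) (pi : lev r -> R) : Prop :=
  forall x, x \in cells r M -> pi x = \prod_(j in M) marg r M pi j (x j).

Arguments completely_independent {R d} r M pi.
Definition Pset d (M : {set 'I_d}) : {set {set 'I_d}} :=
  [set t : {set 'I_d} | (t != set0) && (t \subset M)].

Definition Vset d K (N : 'I_K -> {set 'I_d}) : {set {set 'I_d}} :=
  [set t : {set 'I_d} | (t != set0) && [exists k, t \subset N k]].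

Definition Aset d (M a b : {set 'I_d}) : {set {set 'I_d}} :=
  [set t : {set 'I_d} | [&& t \subset M, t :&: a != set0 & t :&: b != set0]].

Definition vcols (R : Type) d (r : 'I_d -> nat) m (H : {set {set 'I_d}})
    (Q : 'M[R]_(m, #|cols r H|)) (v : {set 'I_d}) : {set 'I_#|cols r H|} :=
  [set k | supp (enum_val k) == v].

Arguments vcols {R d r m H} Q v.
Definition vblock (R : Type) d (r : 'I_d -> nat) m (H : {set {set 'I_d}})
    (Q : 'M[R]_(m, #|cols r H|)) (v : {set 'I_d}) : 'M[R]_(m, #|vcols Q v|) :=
  colsub (fun k : 'I_#|vcols Q v| => enum_val k) Q.

Arguments vblock {R d r m H} Q v.

(* Main.v *)
Require Import Defs.
From HB Require Import structures.
From mathcomp Require Import all_boot all_order all_algebra.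
From mathcomp Require Import ring lra.
Set Implicit Arguments. Unset Strict Implicit. Unset Printing Implicit Defensive.
Import Order.TTheory GRing.Theory Num.Theory.
Local Open Scope ring_scope.

Definition upd d (r : 'I_d -> nat) (x : lev r) (l : 'I_d) (m : nat) : lev r :=
  [ffun i => if i == l then inord m else x i].

Lemma upd_other d (r : 'I_d -> nat) (x : lev r) l m i : i != l -> upd x l m i = x i.
Proof. by move=> il; rewrite /upd ffunE (negbTE il). Qed.

Lemma upd_same d (r : 'I_d -> nat) (x : lev r) l (m : 'I_(r l).+1) : upd x l m l = m.
Proof. by rewrite /upd ffunE eqxx inord_val. Qed.

Lemma upd_upd d (r : 'I_d -> nat) (x : lev r) l m m' : upd (upd x l m) l m' = upd x l m'.
Proof.
apply/ffunP=> i; rewrite /upd !ffunE; by case: (i == l).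
Qed.

Lemma upd_id d (r : 'I_d -> nat) (x : lev r) l : upd x l (x l) = x.
Proof.
apply/ffunP=> i; rewrite /upd !ffunE; case: eqP => // ->; by rewrite inord_val.
Qed.

Lemma upd_eq d (r : 'I_d -> nat) (x : lev r) l (m : 'I_(r l).+1) :
  (upd x l m == x) = (x l == m).
Proof.
apply/eqP/eqP => [<- | <-]; first by rewrite upd_same.
exact: upd_id.
Qed.

Lemma upd_cells d (r : 'I_d -> nat) (M : {set 'I_d}) (x : lev r) l m :
  l \in M -> (upd x l m \in cells r M) = (x \in cells r M).
Proof.
move=> lM; rewrite /cells !inE; apply/subsetP/subsetP => H i; rewrite /supp inE => Hi.
- case: (eqVneq i l) => [-> //| il]; apply: H; by rewrite inE upd_other.
- case: (eqVneq i l) => [-> //| il]; apply: H; by rewrite inE -(upd_other x m il).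
Qed.

Definition Ex (R : nzRingType) d (r : 'I_d -> nat) (M : {set 'I_d}) (pi : lev r -> R)
  (f : lev r -> R) := \sum_(x in cells r M) pi x * f x.

Lemma pi_upd (R : comNzRingType) d (r : 'I_d -> nat) (M : {set 'I_d}) (pi : lev r -> R) x l
   (m : 'I_(r l).+1) :
  completely_independent r M pi -> l \in M -> x \in cells r M ->
  pi (upd x l m) * marg r M pi l (x l) = pi x * marg r M pi l m.
Proof.
move=> ci lM xc; rewrite (ci (upd x l m)); last by rewrite upd_cells.
rewrite (ci x xc).
rewrite !(bigD1 l lM) /= upd_same.
rewrite (eq_bigr (fun i => marg r M pi i (x i))); last first.
  by move=> i /andP[_ il]; rewrite upd_other.
ring.
Qed.

Lemma slice_reindex (R : nzRingType) d (r : 'I_d -> nat) (M : {set 'I_d}) l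
  (m m' : 'I_(r l).+1) (F : lev r -> R) : l \in M ->
  \sum_(x in cells r M | x l == m) F (upd x l m') =
  \sum_(y in cells r M | y l == m') F y.
Proof.
move=> lM.
rewrite [RHS](reindex_onto (fun x => upd x l m') (fun y => upd y l m)) /=; last first.
  by move=> y /andP[_ /eqP <-]; rewrite upd_upd upd_id.
apply: eq_bigl => x; rewrite upd_cells // upd_same eqxx andbT upd_upd upd_eq.
done.
Qed.

Lemma sum_marg (R : nzRingType) d (r : 'I_d -> nat) (M : {set 'I_d}) l
  (F : lev r -> R) :
  \sum_(x in cells r M) F x = \sum_(m : 'I_(r l).+1) \sum_(x in cells r M | x l == m) F x.
Proof. by rewrite (partition_big (fun x : lev r => x l) predT). Qed.

Lemma slice_indep (R : fieldType) d (r : 'I_d -> nat) (M : {set 'I_d}) (pi : lev r -> R) l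
   (h : lev r -> R) (m : 'I_(r l).+1) :
  completely_independent r M pi -> l \in M -> \sum_(x in cells r M) pi x = 1 ->
  (forall x (m : 'I_(r l).+1), h (upd x l m) = h x) ->
  \sum_(x in cells r M | x l == m) pi x * h x = marg r M pi l m * Ex M pi h.
Proof.
move=> ci lM s1 hinv.
pose A (m : 'I_(r l).+1) := \sum_(x in cells r M | x l == m) pi x * h x.
have key : forall m1 m2, A m1 * marg r M pi l m2 = A m2 * marg r M pi l m1.
  move=> m1 m2; rewrite /A big_distrl /=.
  transitivity (\sum_(x in cells r M | x l == m1)
     (marg r M pi l m1 * (pi (upd x l m2) * h (upd x l m2)))).
    apply: eq_bigr => x /andP[xc /eqP xl].
    rewrite hinv -xl; have E := pi_upd m2 ci lM xc.
    transitivity ((pi (upd x l m2) * marg r M pi l (x l)) * h x); first by rewrite E; ring.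
    ring.
  rewrite -big_distrr /= (slice_reindex m1 m2 (fun y => pi y * h y)) // mulrC.
  done.
have s1' : \sum_(m2 : 'I_(r l).+1) marg r M pi l m2 = 1.
  by rewrite -s1 (@sum_marg _ _ _ M l).
have : A m * (\sum_(m2 : 'I_(r l).+1) marg r M pi l m2) = marg r M pi l m * Ex M pi h.
  rewrite big_distrr /= (eq_bigr _ (fun m2 _ => key m m2)) -big_distrl /= mulrC.
  by rewrite /Ex (@sum_marg _ _ _ M l).
by rewrite s1' mulr1.
Qed.

Lemma indep_prod (R : fieldType) d (r : 'I_d -> nat) (M : {set 'I_d}) (pi : lev r -> R) l
   (h : lev r -> R) (phi : 'I_(r l).+1 -> R) :
  completely_independent r M pi -> l \in M -> \sum_(x in cells r M) pi x = 1 ->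
  (forall x (m : 'I_(r l).+1), h (upd x l m) = h x) ->
  Ex M pi (fun x => h x * phi (x l)) = Ex M pi h * Ex M pi (fun x => phi (x l)).
Proof.
move=> ci lM s1 hinv.
rewrite /Ex (@sum_marg _ _ _ M l) [X in _ * X](@sum_marg _ _ _ M l) big_distrr /=.
apply: eq_bigr => m _.
transitivity (phi m * \sum_(x in cells r M | x l == m) pi x * h x).
  rewrite big_distrr; apply: eq_bigr => x /andP[_ /eqP ->] /=; ring.
rewrite slice_indep //.
have -> : \sum_(x in cells r M | x l == m) pi x * phi (x l) = phi m * marg r M pi l m.
  by rewrite /marg big_distrr; apply: eq_bigr => x /andP[_ /eqP ->] /=; ring.
rewrite /Ex /=; ring.
Qed.

Definition ind (R : nzRingType) d (r : 'I_d -> nat) (c x : lev r) : R :=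
  \prod_(j in supp c) ((x j == c j)%:R).
Arguments ind {R d r} c x.

Definition cov (R : nzRingType) d (r : 'I_d -> nat) (M : {set 'I_d}) (pi : lev r -> R)
  (f g : lev r -> R) := Ex M pi (fun x => f x * g x) - Ex M pi f * Ex M pi g.

Definition invar (R : Type) d (r : 'I_d -> nat) l (h : lev r -> R) :=
  forall x (m : 'I_(r l).+1), h (upd x l m) = h x.

Lemma Ex_ext (R : nzRingType) d (r : 'I_d -> nat) (M : {set 'I_d}) (pi : lev r -> R) f g :
  (forall x, x \in cells r M -> f x = g x) -> Ex M pi f = Ex M pi g.
Proof. by move=> e; apply: eq_bigr => x xc; rewrite e. Qed.

Lemma Ex_lin (R : comNzRingType) d (r : 'I_d -> nat) (M : {set 'I_d}) (pi : lev r -> R) f g a b :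
  Ex M pi (fun x => a * f x + b * g x) = a * Ex M pi f + b * Ex M pi g.
Proof.
rewrite /Ex !big_distrr -big_split /=; apply: eq_bigr => x _ /=; ring.
Qed.

Lemma Ex_cst (R : comNzRingType) d (r : 'I_d -> nat) (M : {set 'I_d}) (pi : lev r -> R) a :
  \sum_(x in cells r M) pi x = 1 -> Ex M pi (fun=> a) = a.
Proof. by move=> s1; rewrite /Ex -big_distrl /= s1 mul1r. Qed.

Lemma cov_center (R : fieldType) d (r : 'I_d -> nat) (M : {set 'I_d}) (pi : lev r -> R) l
   (f h : lev r -> R) (psi : 'I_(r l).+1 -> R) :
  completely_independent r M pi -> l \in M -> \sum_(x in cells r M) pi x = 1 ->
  invar l f -> invar l h -> Ex M pi (fun x => psi (x l)) = 0 ->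
  cov M pi f (fun x => h x * psi (x l)) = 0.
Proof.
move=> ci lM s1 fi hi e0; rewrite /cov.
have -> : Ex M pi (fun x => f x * (h x * psi (x l))) = Ex M pi (fun x => (f x * h x) * psi (x l)).
  by apply: Ex_ext => x _; rewrite mulrA.
rewrite (@indep_prod _ _ _ M pi l (fun x => f x * h x)) //; last by move=> x m /=; rewrite fi hi.
rewrite (@indep_prod _ _ _ M pi l h) // e0; ring.
Qed.

Lemma ind_inv (R : nzRingType) d (r : 'I_d -> nat) (c : lev r) l :
  l \notin supp c -> invar l (fun x => ind (R := R) c x).
Proof.
move=> lc x m; rewrite /ind; apply: eq_bigr => i ic; rewrite upd_other //.
by apply: contraNneq lc => <-.
Qed.

Lemma prod_inv (R : nzRingType) d (r : 'I_d -> nat) (S : {set 'I_d}) l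
  (F : forall i : 'I_d, 'I_(r i).+1 -> R) :
  invar l (fun x : lev r => \prod_(i in S | i != l) F i (x i)).
Proof. by move=> x m; apply: eq_bigr => i /andP[_ il]; rewrite upd_other. Qed.

Lemma Vset_sub d K (N : 'I_K -> {set 'I_d}) (M : {set 'I_d}) t :
  (forall k, N k \proper M) -> t \in Vset N -> t \subset M.
Proof.
move=> NM; rewrite inE => /andP[_ /existsP[k tk]].
exact: subset_trans tk (proper_sub (NM k)).
Qed.

Lemma Vset_down d K (N : 'I_K -> {set 'I_d}) (s t : {set 'I_d}) :
  t \in Vset N -> s \subset t -> s != set0 -> s \in Vset N.
Proof.
rewrite !inE => /andP[_ /existsP[k tk]] st s0; rewrite s0 /=.
by apply/existsP; exists k; exact: subset_trans st tk.
Qed.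

Lemma Aset_up d (M a b s t : {set 'I_d}) :
  s \subset t -> t \subset M -> s \in Aset M a b -> t \in Aset M a b.
Proof.
move=> st tM; rewrite !inE tM => /and3P[_ sa sb] /=.
apply/andP; split.
- apply: contraNneq sa => ta; rewrite -subset0 -ta; exact: setSI.
- apply: contraNneq sb => tb; rewrite -subset0 -tb; exact: setSI.
Qed.

Definition restr d (r : 'I_d -> nat) (c : lev r) (T : {set 'I_d}) : lev r :=
  [ffun i => if i \in T then c i else ord0].

Lemma supp_restr d (r : 'I_d -> nat) (c : lev r) (T : {set 'I_d}) :
  T \subset supp c -> supp (restr c T) = T.
Proof.
move=> Tc; apply/setP => i; rewrite /supp !inE ffunE.
case: ifP => // iT; move/subsetP: Tc => /(_ i iT); by rewrite inE.
Qed.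

Lemma ind_restr (R : nzRingType) d (r : 'I_d -> nat) (c x : lev r) (T : {set 'I_d}) :
  T \subset supp c -> ind (R := R) (restr c T) x = \prod_(i in T) ((x i == c i)%:R).
Proof.
move=> Tc; rewrite /ind supp_restr //; apply: eq_bigr => i iT; by rewrite ffunE iT.
Qed.

Lemma prod_expand (R : comNzRingType) (I : finType) (A : {set I}) (f g : I -> R) :
  \prod_(i in A) (f i + g i) =
  \sum_(S : {set I} | S \subset A) (\prod_(i in S) f i * \prod_(i in A :\: S) g i).
Proof.
rewrite big_mkcond /=.
rewrite (eq_bigr (fun i => (if i \in A then f i else 0) + (if i \in A then g i else 1))); last first.
  by move=> i _; case: ifP; rewrite ?addr0 ?add0r.

rewrite bigA_distr /= [RHS]big_mkcond /=.
apply: eq_bigr => S _; case: ifP => SA.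
- rewrite (bigID (mem S)) /=; congr (_ * _).
    by apply: eq_bigr => i iS; rewrite iS (subsetP SA).
  rewrite [LHS]big_mkcond [RHS]big_mkcond /=; apply: eq_bigr => i _; rewrite !inE.
  by case: (i \in S); case: (i \in A).
- case/subsetPn: (negbT SA) => i iS iA.
  by rewrite (bigD1 i) //= iS (negbTE iA) mul0r.
Qed.

Definition vecf (R : Type) d (r : 'I_d -> nat) (M : {set 'I_d}) (f : lev r -> R)
  : 'cV[R]_#|cells r M| := \col_s f (enum_val s).

Lemma Gmx_mul (R : comNzRingType) d (r : 'I_d -> nat) (M : {set 'I_d}) X (z : 'cV[R]_#|cols r X|) :
  Gmx r M X *m z = vecf M (fun x => \sum_k ind (enum_val k) x * z k 0).
Proof. by apply/matrixP => s i; rewrite !mxE ord1; apply: eq_bigr => k _; rewrite mxE. Qed.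

Lemma GOmega (R : comNzRingType) d (r : 'I_d -> nat) (M : {set 'I_d}) (pi : lev r -> R) X f :
  (Gmx (R:=R) r M X)^T *m Omega r M pi *m vecf M f = \col_k cov M pi (ind (enum_val k)) f.
Proof.
apply/matrixP => k i; rewrite !mxE ord1.
under eq_bigr do rewrite !mxE big_distrl /=.
rewrite exchange_big /=.
transitivity (\sum_(s < #|cells r M|) ind (enum_val k) (enum_val s) *
   (pi (enum_val s) * f (enum_val s) - pi (enum_val s) * Ex M pi f)).
  apply: eq_bigr => s _.
  rewrite (bigD1 s) //= !mxE eqxx.
  rewrite (eq_bigr (fun t => - (ind (enum_val k) (enum_val s) * pi (enum_val s)) * (pi (enum_val t) * f (enum_val t)))); last first.
    by move=> t ts; rewrite !mxE eq_sym (negbTE ts) /= /ind mul0r; ring.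
  rewrite -big_distrr /= /Ex.
  have -> : \sum_(i0 < #|cells r M| | i0 != s) pi (enum_val i0) * f (enum_val i0) =
     \sum_(x in cells r M) pi x * f x - pi (enum_val s) * f (enum_val s).
    by rewrite (big_enum_val (fun x => pi x * f x)) [in RHS](bigD1 s) //= addrAC subrr add0r.
  rewrite /ind /=; ring.
rewrite /cov [in RHS]/Ex !(big_enum_val (fun x => pi x * _)) /=.
rewrite big_distrl /= -sumrB; apply: eq_bigr => s _ /=.
rewrite /Ex (big_enum_val (fun x => pi x * f x)); ring.
Qed.

Lemma cov_add_cst (R : comNzRingType) d (r : 'I_d -> nat) (M : {set 'I_d}) (pi : lev r -> R) f w c0 :
  \sum_(x in cells r M) pi x = 1 ->
  cov M pi f (fun x => c0 + w x) = cov M pi f w.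
Proof.
move=> s1; rewrite /cov /Ex.
rewrite (eq_bigr (fun x => c0 * (pi x * f x) + pi x * (f x * w x))); last by move=> x _; ring.
rewrite [X in _ * X](eq_bigr (fun x => c0 * pi x + pi x * w x)); last by move=> x _; ring.
rewrite !big_split /= -!big_distrr /= s1; ring.
Qed.

Lemma Q_zero (R : fieldType) d (r : 'I_d -> nat) (M : {set 'I_d}) (pi : lev r -> R)
   (I H Rc : {set {set 'I_d}}) (y : 'cV[R]_#|cols r H|) (z : 'cV[R]_#|cols r Rc|) c0 w :
  \sum_(x in cells r M) pi x = 1 ->
  (forall s, (Gmx r M H *m y) s 0 = c0 + (Gmx r M Rc *m z) s 0 + w (enum_val s)) ->
  (forall c : lev r, supp c \in I :|: Rc -> cov M pi (ind c) w = 0) ->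
  (z = 0 \/ Fmx r M pi Rc Rc \in unitmx) ->
  Qmx r M pi I H Rc *m y = 0.
Proof.
move=> s1 Hg Hw Hz.
have eg : Gmx r M H *m y = Gmx r M Rc *m z + vecf M (fun x => c0 + w x).
  apply/matrixP => s i; rewrite ord1 Hg [RHS]mxE [X in _ = _ + X]mxE. ring.
have key : forall Y : {set {set 'I_d}}, Y \subset I :|: Rc ->
    Fmx r M pi Y H *m y = Fmx r M pi Y Rc *m z.
  move=> Y XIR; rewrite /Fmx -!mulmxA eg !mulmxDr [X in _ + X]mulmxA GOmega.
  rewrite [X in _ + X](_ : _ = 0) ?addr0 //; apply/matrixP => k i; rewrite !mxE.
  rewrite (cov_add_cst (M := M) (pi := pi) _ w c0 s1).
  apply: Hw; move: (enum_valP k); rewrite inE => kX; exact: (subsetP XIR).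
have kI := key I (subsetUl _ _); have kR := key Rc (subsetUr _ _).
rewrite /Qmx mulmxBl.
have kz : invmx (Fmx r M pi Rc Rc) *m (Fmx r M pi Rc Rc *m z) = z.
  by case: Hz => [-> | u]; [rewrite !mulmx0 | rewrite mulKmx].
apply: (@eq_trans _ _ (Fmx r M pi I Rc *m z - Fmx r M pi I Rc *m z)); last exact: subrr.
congr (_ - _); first exact: kI.
rewrite -(mulmxA (Fmx r M pi I Rc *m invmx _)) kR -mulmxA kz //.
Qed.

Definition Orth (R : nzRingType) d (r : 'I_d -> nat) (M : {set 'I_d}) (pi : lev r -> R)
  K (N : 'I_K -> {set 'I_d}) (w : lev r -> R) :=
  forall c : lev r, supp c \in Vset N -> cov M pi (ind c) w = 0.

Definition Dec (R : nzRingType) d (r : 'I_d -> nat) (M : {set 'I_d}) (pi : lev r -> R)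
  K (N : 'I_K -> {set 'I_d}) (Rc : {set {set 'I_d}}) (u : lev r -> R) :=
  exists (z : 'cV[R]_#|cols r Rc|) c0 w, Orth M pi N w /\
    forall x, x \in cells r M -> u x = c0 + \sum_k ind (enum_val k) x * z k 0 + w x.

Lemma cov_ext (R : nzRingType) d (r : 'I_d -> nat) (M : {set 'I_d}) (pi : lev r -> R) f u v :
  (forall x, x \in cells r M -> u x = v x) -> cov M pi f u = cov M pi f v.
Proof.
by move=> e; rewrite /cov; congr (_ - _ * _); apply: Ex_ext => x xc; rewrite e.
Qed.

Lemma cov_lin (R : comNzRingType) d (r : 'I_d -> nat) (M : {set 'I_d}) (pi : lev r -> R) f u v a b :
  cov M pi f (fun x => a * u x + b * v x) = a * cov M pi f u + b * cov M pi f v.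
Proof.
rewrite /cov.
have -> : Ex M pi (fun x => f x * (a * u x + b * v x)) =
          a * Ex M pi (fun x => f x * u x) + b * Ex M pi (fun x => f x * v x).
  rewrite -Ex_lin; apply: Ex_ext => x _; ring.
rewrite Ex_lin; ring.
Qed.

Lemma cov0 (R : nzRingType) d (r : 'I_d -> nat) (M : {set 'I_d}) (pi : lev r -> R) f :
  cov M pi f (fun=> 0) = 0.
Proof.
rewrite /cov /Ex.
have h1 : \sum_(x in cells r M) pi x * (f x * 0) = 0 by apply: big1 => x _; rewrite !mulr0.
have h2 : \sum_(x in cells r M) pi x * 0 = 0 by apply: big1 => x _; rewrite mulr0.
by rewrite h1 h2 mulr0 subrr.
Qed.

Lemma Dec_ext (R : nzRingType) d (r : 'I_d -> nat) (M : {set 'I_d}) (pi : lev r -> R)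
  K (N : 'I_K -> {set 'I_d}) Rc u v :
  (forall x, x \in cells r M -> u x = v x) -> Dec M pi N Rc u -> Dec M pi N Rc v.
Proof.
move=> e [z [c0 [w [ow hu]]]]; exists z, c0, w; split => // x xc; by rewrite -e // hu.
Qed.

Lemma Dec_lin (R : comNzRingType) d (r : 'I_d -> nat) (M : {set 'I_d}) (pi : lev r -> R)
  K (N : 'I_K -> {set 'I_d}) Rc u v a b :
  Dec M pi N Rc u -> Dec M pi N Rc v -> Dec M pi N Rc (fun x => a * u x + b * v x).
Proof.
move=> [z [c0 [w [ow hu]]]] [z' [c0' [w' [ow' hv]]]].
exists (a *: z + b *: z'), (a * c0 + b * c0'), (fun x => a * w x + b * w' x); split.
  by move=> c cV; rewrite cov_lin ow // ow' // !mulr0 addr0.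
move=> x xc; rewrite hu // hv //.
have -> : \sum_k ind (enum_val k) x * (a *: z + b *: z') k 0 =
  a * \sum_k ind (enum_val k) x * z k 0 + b * \sum_k ind (enum_val k) x * z' k 0.
  rewrite !big_distrr -big_split; apply: eq_bigr => k _ /=; rewrite !mxE; ring.
ring.
Qed.

Lemma Dec_cst (R : nzRingType) d (r : 'I_d -> nat) (M : {set 'I_d}) (pi : lev r -> R)
  K (N : 'I_K -> {set 'I_d}) Rc a : Dec M pi N Rc (fun=> a).
Proof.
exists 0, a, (fun=> 0); split.
  by move=> c _; rewrite cov0.
by move=> x _; rewrite big1 ?addr0 // => k _; rewrite mxE mulr0.
Qed.

Lemma Dec_orth (R : nzRingType) d (r : 'I_d -> nat) (M : {set 'I_d}) (pi : lev r -> R)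
  K (N : 'I_K -> {set 'I_d}) Rc w : Orth M pi N w -> Dec M pi N Rc w.
Proof.
move=> ow; exists 0, 0, w; split => // x _.
by rewrite big1 ?addr0 ?add0r // => k _; rewrite mxE mulr0.
Qed.

Lemma Dec_ind (R : nzRingType) d (r : 'I_d -> nat) (M : {set 'I_d}) (pi : lev r -> R)
  K (N : 'I_K -> {set 'I_d}) Rc (c : lev r) : c \in cols r Rc -> Dec M pi N Rc (ind c).
Proof.
move=> cR; exists (\col_k ((k == enum_rank_in cR c)%:R)), 0, (fun=> 0); split.
  by move=> c' _; rewrite cov0.
move=> x _; rewrite (bigD1 (enum_rank_in cR c)) //= big1 ?mxE ?eqxx ?enum_rankK_in //.
  by rewrite add0r !addr0 mulr1.
by move=> k kc; rewrite mxE (negbTE kc) mulr0.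
Qed.

Lemma Dec_sum (R : comNzRingType) d (r : 'I_d -> nat) (M : {set 'I_d}) (pi : lev r -> R)
  K (N : 'I_K -> {set 'I_d}) Rc (I : finType) (P : pred I) (F : I -> lev r -> R) :
  (forall i, P i -> Dec M pi N Rc (F i)) -> Dec M pi N Rc (fun x => \sum_(i | P i) F i x).
Proof.
move=> HF; rewrite /index_enum; elim: (Finite.enum I) => [|i s IH].
  by apply: Dec_ext (Dec_cst _ _ _ _ 0) => x _; rewrite big_nil.
case Pi: (P i).
  apply: (Dec_ext (u := fun x => 1 * F i x + 1 * \sum_(j <- s | P j) F j x)).
    by move=> x _; rewrite big_cons Pi !mul1r.
  exact: Dec_lin (HF i Pi) IH.
by apply: Dec_ext IH => x _; rewrite big_cons Pi.
Qed.

Lemma Dec_scale (R : comNzRingType) d (r : 'I_d -> nat) (M : {set 'I_d}) (pi : lev r -> R)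
  K (N : 'I_K -> {set 'I_d}) Rc u a :
  Dec M pi N Rc u -> Dec M pi N Rc (fun x => u x * a).
Proof.
move=> du; apply: (Dec_ext (u := fun x => a * u x + 0 * 0)); first by move=> x _; ring.
exact: Dec_lin du (Dec_cst _ _ _ _ 0).
Qed.

Lemma Ex_marg (R : nzRingType) d (r : 'I_d -> nat) (M : {set 'I_d}) (pi : lev r -> R) l
  (m : 'I_(r l).+1) : Ex M pi (fun x => (x l == m)%:R) = marg r M pi l m.
Proof.
rewrite /Ex /marg [RHS]big_mkcondr; apply: eq_bigr => x _.
by case: eqP; rewrite ?mulr1 ?mulr0.
Qed.

Lemma Ex_centered (R : comNzRingType) d (r : 'I_d -> nat) (M : {set 'I_d}) (pi : lev r -> R) l
  (m : 'I_(r l).+1) : \sum_(x in cells r M) pi x = 1 ->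
  Ex M pi (fun x => (x l == m)%:R - marg r M pi l m) = 0.
Proof.
move=> s1.
have -> : Ex M pi (fun x => (x l == m)%:R - marg r M pi l m) =
   Ex M pi (fun x => 1 * (x l == m)%:R + (- marg r M pi l m) * 1).
  by apply: Ex_ext => x _; ring.
by rewrite Ex_lin Ex_marg Ex_cst //; ring.
Qed.

Lemma orth_prod (R : fieldType) d (r : 'I_d -> nat) (M : {set 'I_d}) (pi : lev r -> R)
  K (N : 'I_K -> {set 'I_d}) (c : lev r) (S : {set 'I_d}) :
  completely_independent r M pi -> \sum_(x in cells r M) pi x = 1 ->
  S \subset M -> S \notin Vset N -> S != set0 ->
  Orth M pi N (fun x => \prod_(l in S) ((x l == c l)%:R - marg r M pi l (c l))).
Proof.
move=> ci s1 SM SV S0 c' c'V.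
have [l lS lc'] : exists2 l, l \in S & l \notin supp c'.
  apply/exists_inP; apply: contraNT SV => /exists_inPn H.
  apply: (Vset_down c'V) => //; apply/subsetP => l lS; move: (H l lS); by rewrite negbK.
have lM : l \in M by exact: (subsetP SM).
apply: (@eq_trans _ _ (cov M pi (ind c') (fun x => (\prod_(i in S | i != l) ((x i == c i)%:R - marg r M pi i (c i)))
             * ((x l == c l)%:R - marg r M pi l (c l))))).
  by apply: cov_ext => x _; rewrite (bigD1 l) //= mulrC.
apply: (@cov_center _ _ _ _ _ l _ _ (fun m => (m == c l)%:R - marg r M pi l (c l))) => //.
- exact: ind_inv.
- exact: (@prod_inv R d r S l (fun i (m : 'I_(r i).+1) => (m == c i)%:R - marg r M pi i (c i))).
- exact: Ex_centered.
Qed.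

Lemma decomp_i (R : fieldType) d (r : 'I_d -> nat) (M : {set 'I_d}) (pi : lev r -> R)
  K (N : 'I_K -> {set 'I_d}) (a b : {set 'I_d}) (I : {set {set 'I_d}}) (c : lev r) :
  completely_independent r M pi -> \sum_(x in cells r M) pi x = 1 ->
  I \subset Aset M a b -> supp c \subset M -> supp c \notin Aset M a b ->
  Dec M pi N (Vset N :\: I) (ind c).
Proof.
move=> ci s1 IA vM vA.
set v := supp c.
pose e := fun l (m : 'I_(r l).+1) => (m == c l)%:R - marg r M pi l (c l).
apply: (Dec_ext (u := fun x => \sum_(S : {set 'I_d} | S \subset v)
   ((\prod_(l in S) e l (x l)) * \prod_(l in v :\: S) marg r M pi l (c l)))).
  move=> x _; rewrite -prod_expand; apply: eq_bigr => l _; rewrite /e; ring.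
apply: Dec_sum => S Sv; apply: Dec_scale.
have SM : S \subset M := subset_trans Sv vM.
have [S0 | S0] := eqVneq S set0.
  by apply: (Dec_ext (u := fun=> 1)); [move=> x _; rewrite S0 big_set0 | exact: Dec_cst].
have [SV | SV] := boolP (S \in Vset N); last first.
  by apply: Dec_orth; exact: orth_prod.
apply: (Dec_ext (u := fun x => \sum_(T : {set 'I_d} | T \subset S)
   ((\prod_(l in T) ((x l == c l)%:R : R)) * \prod_(l in S :\: T) (- marg r M pi l (c l))))).
  by move=> x _; rewrite -prod_expand.
apply: Dec_sum => T TS; apply: Dec_scale.
have [T0 | T0] := eqVneq T set0.
  by apply: (Dec_ext (u := fun=> 1)); [move=> x _; rewrite T0 big_set0 | exact: Dec_cst].
have Tv : T \subset v := subset_trans TS Sv.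
apply: (Dec_ext (u := ind (restr c T))); first by move=> x _; rewrite ind_restr.
apply: Dec_ind; rewrite inE supp_restr // in_setD (Vset_down SV TS T0) andbT.
apply: contra vA => TI; apply: (Aset_up Tv vM); exact: (subsetP IA).
Qed.

Lemma var_zero (R : realFieldType) d (r : 'I_d -> nat) (M : {set 'I_d}) (pi : lev r -> R) f :
  (forall x, x \in cells r M -> 0 < pi x) -> \sum_(x in cells r M) pi x = 1 ->
  cov M pi f f = 0 -> forall x, x \in cells r M -> f x = Ex M pi f.
Proof.
move=> pos s1 c0.
set m := Ex M pi f.
have e : \sum_(x in cells r M) pi x * (f x - m) ^+ 2 = 0.
  rewrite -[RHS]c0 /cov -/m.
  have -> : \sum_(x in cells r M) pi x * (f x - m) ^+ 2 =
     \sum_(x in cells r M) (pi x * (f x * f x) + (- (2%:R * m)) * (pi x * f x) + m ^+ 2 * pi x).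
    by apply: eq_bigr => x _; ring.
  have em : \sum_(i in cells r M) pi i * f i = m by [].
  rewrite !big_split /= -!big_distrr /= s1 em /Ex; ring.
move=> x xc.
have Hx := psumr_eq0P (fun y yc => mulr_ge0 (ltW (pos y yc)) (sqr_ge0 (f y - m))) e xc.
move/eqP: Hx. rewrite mulf_eq0 (gt_eqF (pos x xc)) /= sqrf_eq0 subr_eq0 => /eqP //.
Qed.

Lemma cov_sum_l (R : comNzRingType) d (r : 'I_d -> nat) (M : {set 'I_d}) (pi : lev r -> R)
  (J : finType) (z : J -> R) (F : J -> lev r -> R) g :
  \sum_k z k * cov M pi (F k) g = cov M pi (fun x => \sum_k z k * F k x) g.
Proof.
rewrite /cov /Ex.
under eq_bigr do rewrite mulrBr.
rewrite sumrB; congr (_ - _).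
  rewrite (eq_bigr (fun x => \sum_k z k * (pi x * (F k x * g x)))); last first.
    by move=> x _; rewrite big_distrl big_distrr /=; apply: eq_bigr => k _; ring.
  rewrite exchange_big /=; apply: eq_bigr => k _; rewrite big_distrr.
  by apply: eq_bigr.
under eq_bigr do rewrite mulrA.
rewrite -big_distrl /=; congr (_ * _).
rewrite (eq_bigr (fun x => \sum_k z k * (pi x * F k x))); last first.
  by move=> x _; rewrite big_distrr /=; apply: eq_bigr => k _; ring.
rewrite exchange_big /=; apply: eq_bigr => k _; by rewrite big_distrr.
Qed.

Lemma ind_self (R : nzRingType) d (r : 'I_d -> nat) (c : lev r) : ind (R := R) c c = 1.
Proof. by apply: big1 => j _; rewrite eqxx. Qed.

Lemma ind_indep (R : fieldType) d (r : 'I_d -> nat) (M : {set 'I_d}) (X : {set {set 'I_d}})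
  (z : 'I_#|cols r X| -> R) m :
  (forall t, t \in X -> (t != set0) && (t \subset M)) ->
  (forall x, x \in cells r M -> \sum_k z k * ind (enum_val k) x = m) ->
  forall k, z k = 0.
Proof.
move=> HX Hz.
have cX : forall k : 'I_#|cols r X|, (supp (enum_val k) != set0) && (supp (enum_val k) \subset M).
  by move=> k; apply: HX; move: (enum_valP k); rewrite inE.
have m0 : m = 0.
  pose x0 : lev r := [ffun i => ord0].
  have x0c : x0 \in cells r M by rewrite inE; apply/subsetP => i; rewrite inE ffunE.
  rewrite -(Hz x0 x0c); apply: big1 => k _.
  case/andP: (cX k) => /set0Pn[j js] _.
  rewrite /ind (bigD1 j) //= ffunE.
  move: js; rewrite inE => js.
  have -> : ((ord0 : 'I_(r j).+1) == enum_val k j) = false.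
    by apply/negbTE; apply: contraNneq js => <-.
  by rewrite mul0r mulr0.
suff : forall n k, (#|supp (enum_val k)| <= n)%N -> z k = 0 by move=> H k; exact: (H _ k (leqnn _)).
elim => [|n IH] k.
  by rewrite leqn0 cards_eq0; case/andP: (cX k) => /negbTE ->.
rewrite leq_eqVlt ltnS => /orP[/eqP skn |]; last exact: IH.
set c := enum_val k.
have cc : c \in cells r M by rewrite inE; case/andP: (cX k).
have := Hz c cc; rewrite m0 (bigD1 k) //= ind_self mulr1 big1 ?addr0 //.
move=> k' k'k.
have [/IH -> //|] := leqP #|supp (enum_val k')| n; first by rewrite mul0r.
move=> gt.
case: (boolP (ind (R := R) (enum_val k') c == 0)) => [/eqP -> | nz]; first by rewrite mulr0.
exfalso; move/eqP: k'k; apply; apply: enum_val_inj.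
have agree : forall j, j \in supp (enum_val k') -> c j = enum_val k' j.
  move=> j js; apply/eqP; apply: contraNT nz => ne.
  by rewrite /ind (bigD1 j) //= (negbTE ne) mul0r.
have sub : supp (enum_val k') \subset supp c.
  apply/subsetP => j js; move: (js); rewrite !inE -(agree j js); done.
have eqs : supp (enum_val k') = supp c.
  apply/eqP; rewrite eqEcard sub /= skn; exact: gt.
apply/ffunP => j; case: (boolP (j \in supp c)) => jc.
  by rewrite agree // eqs.
apply: val_inj => /=.
have j1 := jc; rewrite -eqs inE negbK in j1; rewrite inE negbK in jc.
by rewrite (eqP j1) (eqP jc).
Qed.

Lemma F_unit (R : realFieldType) d (r : 'I_d -> nat) (M : {set 'I_d}) (pi : lev r -> R)
  (X : {set {set 'I_d}}) :
  (forall t, t \in X -> (t != set0) && (t \subset M)) ->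
  (forall x, x \in cells r M -> 0 < pi x) -> \sum_(x in cells r M) pi x = 1 ->
  Fmx r M pi X X \in unitmx.
Proof.
move=> HX pos s1; rewrite -row_free_unit; apply: inj_row_free => u Hu.
pose gf := fun x => \sum_k u 0 k * ind (R := R) (enum_val k) x.
have G : Gmx r M X *m u^T = vecf M gf.
  apply/matrixP => s i; rewrite !mxE ord1; apply: eq_bigr => k _; rewrite !mxE mulrC.
  done.
have e : (u *m (Fmx r M pi X X *m u^T)) 0 0 = 0 by rewrite mulmxA Hu mul0mx mxE.
have e2 : Fmx r M pi X X *m u^T = \col_k cov M pi (ind (enum_val k)) gf.
  by rewrite /Fmx -mulmxA G GOmega.
rewrite e2 mxE in e.
have e3 : \sum_k u 0 k * cov M pi (ind (enum_val k)) gf = 0.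
  move: e; rewrite (eq_bigr (fun k => u 0 k * cov M pi (ind (enum_val k)) gf)) //.
  by move=> k _; rewrite mxE.
rewrite cov_sum_l in e3.
have hv := var_zero pos s1 e3.
have z0 := ind_indep HX hv.
by apply/matrixP => i k; rewrite ord1 mxE z0.
Qed.

Lemma rank_lt (R : fieldType) m n (A : 'M[R]_(m, n)) (y : 'cV[R]_n) :
  A *m y = 0 -> y != 0 -> (\rank A < n)%N.
Proof.
move=> Ay y0; rewrite ltn_neqAle rank_leq_col andbT; apply: contraNneq y0 => rn.
have rf : row_free A^T by rewrite /row_free mxrank_tr rn.
have : y^T *m A^T == 0 by rewrite -trmx_mul Ay trmx0.
by rewrite mulmx_free_eq0 // => /eqP yt; rewrite -[y]trmxK yt trmx0.
Qed.

Lemma block_rank (R : fieldType) d (r : 'I_d -> nat) m (H : {set {set 'I_d}})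
  (Q : 'M[R]_(m, #|cols r H|)) v (y : 'cV[R]_#|cols r H|) :
  Q *m y = 0 -> (forall j, j \notin vcols Q v -> y j 0 = 0) -> y != 0 ->
  (\rank (vblock Q v) < #|vcols Q v|)%N.
Proof.
move=> Qy yout y0.
case/matrix0Pn: y0 => j [i yj]; rewrite ord1 in yj.
have jv : j \in vcols Q v by apply: contraNT yj => /yout ->; rewrite eqxx.
apply: (rank_lt (y := \col_k y (enum_val k) 0)).
  apply/matrixP => i' i2; rewrite ord1 [RHS]mxE.
  transitivity ((Q *m y) i' 0); last by rewrite Qy mxE.
  rewrite !mxE.
  rewrite [RHS](bigID (fun j => j \in vcols Q v)) /= [X in _ = _ + X]big1 ?addr0.
    rewrite [RHS](big_enum_val (fun j => Q i' j * y j 0)) /=.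
    by apply: eq_bigr => k _; rewrite !mxE.
  by move=> j' /yout ->; rewrite mulr0.
apply/eqP => /matrixP /(_ (enum_rank_in jv j) 0); rewrite !mxE enum_rankK_in //.
exact/eqP.
Qed.

Lemma marg_pos (R : numDomainType) d (r : 'I_d -> nat) (M : {set 'I_d}) (pi : lev r -> R) l x :
  (forall x, x \in cells r M -> 0 < pi x) -> x \in cells r M -> 0 < marg r M pi l (x l).
Proof.
move=> pos xc; rewrite /marg (bigD1 x) /=; last by rewrite xc eqxx.
apply: ltr_wpDr; last exact: pos.
apply: sumr_ge0 => y /andP[/andP[yc _] _]; exact: ltW (pos y yc).
Qed.

Lemma orth_ii (R : fieldType) d (r : 'I_d -> nat) (M : {set 'I_d}) (pi : lev r -> R)
  K (N : 'I_K -> {set 'I_d}) (c1 c2 : lev r) (v : {set 'I_d}) j :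
  completely_independent r M pi -> \sum_(x in cells r M) pi x = 1 ->
  j \in M -> j \in v -> supp c1 = v -> supp c2 = v ->
  (forall i, i != j -> c1 i = c2 i) ->
  (forall t, t \in Vset N -> j \notin t) ->
  Orth M pi N (fun x => marg r M pi j (c2 j) * ind c1 x - marg r M pi j (c1 j) * ind c2 x).
Proof.
move=> ci s1 jM jv s1v s2v e12 jV c' c'V.
pose h := fun x : lev r => \prod_(i in v | i != j) ((x i == c1 i)%:R : R).
pose psi := fun m : 'I_(r j).+1 => marg r M pi j (c2 j) * (m == c1 j)%:R -
   marg r M pi j (c1 j) * (m == c2 j)%:R.
apply: (@eq_trans _ _ (cov M pi (ind c') (fun x => h x * psi (x j)))).
  apply: cov_ext => x _; rewrite /ind s1v s2v /h /psi !(bigD1 j jv) /=.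
  rewrite [X in _ - _ * (_ * X) = _](eq_bigr (fun i => (x i == c1 i)%:R)); last first.
    by move=> i /andP[_ ij]; rewrite e12.
  ring.
apply: cov_center => //.
- by apply: ind_inv; apply: jV.
- exact: (@prod_inv R d r v j (fun i (m : 'I_(r i).+1) => (m == c1 i)%:R)).
- have -> : Ex M pi (fun x => psi (x j)) = Ex M pi (fun x =>
     marg r M pi j (c2 j) * (x j == c1 j)%:R + (- marg r M pi j (c1 j)) * (x j == c2 j)%:R).
    by apply: Ex_ext => x _; rewrite /psi; ring.
  rewrite Ex_lin !Ex_marg; ring.
Qed.

Unset Implicit Arguments.

Theorem lemma5 (R : realFieldType) (d : nat) (r : 'I_d -> nat) (M : {set 'I_d})
    (pi : lev r -> R) (K : nat) (N : 'I_K -> {set 'I_d}) (a b : {set 'I_d})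
    (I H : {set {set 'I_d}}) :
  (forall j, j \in M -> (0 < r j)%N) ->
  (forall x, x \in cells r M -> 0 < pi x) ->
  \sum_(x in cells r M) pi x = 1 ->
  completely_independent r M pi ->
  (forall k, N k \proper M) ->
  a \subset M -> b \subset M -> [disjoint a & b] -> a != set0 -> b != set0 ->
  I \subset Vset N :&: Aset M a b ->
  H \subset Pset M :\: Vset N ->
  (forall v, v \in H -> v \notin Aset M a b ->
     forall (i : 'I_#|cols r I|) (k : 'I_#|cols r H|),
       k \in vcols (Qmx r M pi I H (Vset N :\: I)) v ->
       Qmx r M pi I H (Vset N :\: I) i k = 0)
  /\
  (forall v, v \in H ->
     (exists2 j, j \in v & (2 <= r j)%N /\ (forall t, t \in Vset N -> j \notin t)) ->
     (\rank (vblock (Qmx r M pi I H (Vset N :\: I)) v)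
        < #|vcols (Qmx r M pi I H (Vset N :\: I)) v|)%N).
Proof.
move=> rpos pos s1 ci NM aM bM dab a0 b0 IVA HP.
set Rc := Vset N :\: I.
have IV : I \subset Vset N by move: IVA; rewrite subsetI => /andP[].
have IA : I \subset Aset M a b by move: IVA; rewrite subsetI => /andP[].
have RcX : forall t, t \in Rc -> (t != set0) && (t \subset M).
  move=> t; rewrite in_setD => /andP[_ tV]; rewrite (Vset_sub NM tV) andbT.
  by move: tV; rewrite inE => /andP[].
have IRV : forall c : lev r, supp c \in I :|: Rc -> supp c \in Vset N.
  move=> c; rewrite in_setU => /orP[/(subsetP IV) // | ]; by rewrite in_setD => /andP[].
have HvM : forall v, v \in H -> v \subset M.
  by move=> v /(subsetP HP); rewrite in_setD => /andP[_]; rewrite inE => /andP[].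
split.
- move=> v vH vA i k kv.
  suff : Qmx r M pi I H Rc *m (delta_mx k 0 : 'cV[R]_#|cols r H|) = 0.
    move=> E; have := congr1 (fun A : 'M[R]_(#|cols r I|, 1) => A i 0) E.
    by rewrite /= -colE !mxE.
  have skv : supp (enum_val k) = v by move: kv; rewrite inE => /eqP.
  have svM : supp (enum_val k) \subset M by rewrite skv; apply: HvM.
  have svA : supp (enum_val k) \notin Aset M a b by rewrite skv.
  have [z [c0 [w [ow hu]]]] := @decomp_i R d r M pi K N a b I (enum_val k) ci s1 IA svM svA.
  apply: (Q_zero (c0 := c0) (w := w) (z := z)) => //.
  + move=> s; rewrite -colE mxE [X in _ = _ + X + _]mxE.
    transitivity (ind (R := R) (enum_val k) (enum_val s)); first by rewrite mxE.
    rewrite (hu _ (enum_valP s)); congr (_ + _ + _); apply: eq_bigr => j _; by rewrite mxE.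
  + by move=> c cIR; apply: ow; apply: IRV.
  + by right; apply: F_unit.
- move=> v vH [j jv [rj jV]].
  have vM := HvM v vH.
  have jM : j \in M := subsetP vM j jv.
  pose c1 : lev r := [ffun i => if i \in v then inord 1 else ord0].
  pose c2 := upd c1 j 2.
  have s1v : supp c1 = v.
    apply/setP => i; rewrite inE ffunE; case: ifP => iv //=.
    by rewrite inordK // ltnS; apply: rpos; apply: (subsetP vM).
  have c2j : nat_of_ord (c2 j) = 2%N by rewrite /c2 /upd ffunE eqxx inordK.
  have c1j : nat_of_ord (c1 j) = 1%N.
    by rewrite ffunE jv inordK // ltnS; apply: rpos.
  have s2v : supp c2 = v.
    apply/setP => i; case: (eqVneq i j) => [-> | ij]; first by rewrite inE c2j jv.
    by rewrite inE /c2 upd_other // -[in RHS]s1v inE.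
  have c1H : c1 \in cols r H by rewrite inE s1v.
  have c2H : c2 \in cols r H by rewrite inE s2v.
  pose k1 := enum_rank_in c1H c1; pose k2 := enum_rank_in c1H c2.
  have ek1 : enum_val k1 = c1 by rewrite /k1 enum_rankK_in.
  have ek2 : enum_val k2 = c2 by rewrite /k2 enum_rankK_in.
  have k12 : k1 != k2.
    apply/eqP => e; have := congr1 (fun c : lev r => nat_of_ord (c j)) (etrans (esym ek1) (etrans (congr1 enum_val e) ek2)).
    by rewrite /= c1j c2j.
  set p1 := marg r M pi j (c1 j); set p2 := marg r M pi j (c2 j).
  have p2pos : 0 < p2 by apply: marg_pos; rewrite // inE s2v.
  have k1v : k1 \in vcols (Qmx r M pi I H Rc) v by rewrite inE ek1 s1v.
  have k2v : k2 \in vcols (Qmx r M pi I H Rc) v by rewrite inE ek2 s2v.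
  apply: (block_rank (y := p2 *: (delta_mx k1 0 : 'cV[R]_#|cols r H|) - p1 *: delta_mx k2 0)).
  + apply: (Q_zero (c0 := 0) (z := 0) (w := fun x => p2 * ind c1 x - p1 * ind c2 x)) => //.
    * move=> s; rewrite mulmxBr -!scalemxAr -!colE mulmx0 !mxE !add0r ek1 ek2.
      done.
    * move=> c cIR; apply: (@orth_ii R d r M pi K N c1 c2 v j) => //.
        by move=> i ij; rewrite /c2 upd_other.
      exact: IRV.
    * by left.
  + move=> j' j'n; rewrite !mxE.
    have -> : (j' == k1) = false by apply: contraNF j'n => /eqP ->.
    have -> : (j' == k2) = false by apply: contraNF j'n => /eqP ->.
    by rewrite !mulr0 subrr.
  + apply/eqP => /matrixP /(_ k1 0); rewrite !mxE eqxx (negbTE k12) /= mulr1 mulr0 subr0.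
    by move=> p20; move: p2pos; rewrite p20 ltxx.
Qed.
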